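(* For every set of formulas $\Gamma$ and every formula $\alpha$: if $\Gamma\vdash_{L_1^0}\alpha$ then $\Gamma\vDash_{\mathcal{M}_1^0}\alpha$.
   Context: Formulas are built from a countable set of propositional variables using the unary connectives $\neg$ (negation) and $\circ$ (consistency) and the binary connectives $\land,\lor,\to$. Write $\circ^0\alpha=\alpha$, $\circ^{m+1}\alpha=\circ(\circ^m\alpha)$. The Hilbert calculus mbC has as axiom schemas those of a standard axiomatization of positive classical propositional logic in $\land,\lor,\to$, plus (TND) $\alpha\lor\neg\alpha$ and (bc1) $\circ\alpha\to(\alpha\to(\neg\alpha\to\beta))$; its only rule is modus ponens. mbCciw is mbC plus (ciw) $\circ\alpha\lor(\alpha\land\neg\alpha)$. $L_1^0$ is mbCciw plus the schema $\circ\circ\circ\alpha$. $\Gamma\vdash_L\alpha$ means $\alpha$ is derivable from $\Gamma$ in $L$. Semantics: on $\{0,1\}$ use the Boolean operations $\land,\lor,\to,\sim$ (complement). Let $\mathbb{B}_1^0=\{x=(x_1,x_2,x_3)\in\{0,1\}^3: x_1\lor x_2=1 \text{ and } x_3\lor\sim(x_1\land x_2)=1\}$. The multialgebra $\mathcal{B}_1^0$ on $\mathbb{B}_1^0$ has multioperations $x\# y=\{z\in\mathbb{B}_1^0: z_1=x_1\# y_1\}$ for $\#\in\{\land,\lor,\to\}$, $\neg x=\{z\in\mathbb{B}_1^0: z_1=x_2\}$, $\circ x=\{(\sim(x_1\land x_2),\,x_3,\,x_3\land\sim(x_1\land x_2))\}$. Designated set $D_1^0=\{x: x_1=1\}$;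 $\mathcal{M}_1^0=(\mathcal{B}_1^0,D_1^0)$. A valuation over $\mathcal{M}_1^0$ is a map $h$ from formulas to $\mathbb{B}_1^0$ with $h(\alpha\#\beta)\in h(\alpha)\# h(\beta)$, $h(\neg\alpha)\in\neg h(\alpha)$, $h(\circ\alpha)\in\circ h(\alpha)$. $\Gamma\vDash_{\mathcal{M}_1^0}\alpha$ iff every valuation $h$ with $h[\Gamma]\subseteq D_1^0$ has $h(\alpha)\in D_1^0$. *)

(* Defs.v *)
From Stdlib Require Import Bool.

Inductive formula : Type :=
| Var : nat -> formula
| Neg : formula -> formula
| Circ : formula -> formula
| And : formula -> formula -> formula
| Or : formula -> formula -> formula
| Imp : formula -> formula -> formula.

Fixpoint circ_iter (m : nat) (a : formula) : formula :=
  match m with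
  | O => a
  | S m' => Circ (circ_iter m' a)
  end.

(** Axiom schemas of L_1^0 = mbC + (ciw) + circ circ circ alpha.
    Positive classical logic: standard axiomatization (Ax1-Ax9) as in
    Carnielli-Coniglio's presentation of mbC. *)
Inductive axiom_L10 : formula -> Prop :=
| Ax1 : forall a b, axiom_L10 (Imp a (Imp b a))
| Ax2 : forall a b c,
    axiom_L10 (Imp (Imp a b) (Imp (Imp a (Imp b c)) (Imp a c)))
| Ax3 : forall a b, axiom_L10 (Imp a (Imp b (And a b)))
| Ax4 : forall a b, axiom_L10 (Imp (And a b) a)
| Ax5 : forall a b, axiom_L10 (Imp (And a b) b)
| Ax6 : forall a b, axiom_L10 (Imp a (Or a b))
| Ax7 : forall a b, axiom_L10 (Imp b (Or a b))
| Ax8 : forall a b c,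
    axiom_L10 (Imp (Imp a c) (Imp (Imp b c) (Imp (Or a b) c)))
| Ax9 : forall a b, axiom_L10 (Or a (Imp a b))
| AxTND : forall a, axiom_L10 (Or a (Neg a))
| Axbc1 : forall a b, axiom_L10 (Imp (Circ a) (Imp a (Imp (Neg a) b)))
| Axciw : forall a, axiom_L10 (Or (Circ a) (And a (Neg a)))
| AxCirc3 : forall a, axiom_L10 (circ_iter 3 a).

Inductive derivable_L10 (Gamma : formula -> Prop) : formula -> Prop :=
| D_hyp : forall a, Gamma a -> derivable_L10 Gamma a
| D_ax : forall a, axiom_L10 a -> derivable_L10 Gamma a
| D_mp : forall a b, derivable_L10 Gamma a -> derivable_L10 Gamma (Imp a b) ->
    derivable_L10 Gamma b.

Definition elt : Type := (bool * bool * bool)%type.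
Definition c1 (x : elt) : bool := let '(a, _, _) := x in a.
Definition c2 (x : elt) : bool := let '(_, b, _) := x in b.
Definition c3 (x : elt) : bool := let '(_, _, c) := x in c.

Definition inB10 (x : elt) : Prop :=
  (c1 x || c2 x) = true /\ (c3 x || negb (c1 x && c2 x)) = true.

(** Multioperations of B_1^0 as membership predicates. *)
Definition m_and (x y z : elt) : Prop := inB10 z /\ c1 z = (c1 x && c1 y).
Definition m_or  (x y z : elt) : Prop := inB10 z /\ c1 z = (c1 x || c1 y).
Definition m_imp (x y z : elt) : Prop := inB10 z /\ c1 z = implb (c1 x) (c1 y).
Definition m_neg (x z : elt) : Prop := inB10 z /\ c1 z = c2 x.
Definition m_circ (x z : elt) : Prop :=
  z = (negb (c1 x && c2 x), c3 x, c3 x && negb (c1 x && c2 x)).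

Definition designated (x : elt) : Prop := c1 x = true.

Definition valuation (h : formula -> elt) : Prop :=
  (forall a, inB10 (h a)) /\
  (forall a b, m_and (h a) (h b) (h (And a b))) /\
  (forall a b, m_or (h a) (h b) (h (Or a b))) /\
  (forall a b, m_imp (h a) (h b) (h (Imp a b))) /\
  (forall a, m_neg (h a) (h (Neg a))) /\
  (forall a, m_circ (h a) (h (Circ a))).

Definition entails_M10 (Gamma : formula -> Prop) (a : formula) : Prop :=
  forall h, valuation h -> (forall g, Gamma g -> designated (h g)) ->
    designated (h a).

(* Main.v *)
Require Import Defs.
From Stdlib Require Import Bool.

Theorem theorem2 (Gamma : formula -> Prop) (a : formula) :
  derivable_L10 Gamma a -> entails_M10 Gamma a.
Proof.
  intros Hd h Hv HG.
  destruct Hv as (HB & Hand & Hor & Himp & Hneg & Hcirc).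
  unfold designated in *.
  induction Hd as [a Ha | a Ha | a b _ IH1 _ IH2].
  - apply HG; exact Ha.
  - destruct Ha; simpl;
    rewrite ?(proj2 (Himp _ _)), ?(proj2 (Hor _ _)), ?(proj2 (Hand _ _)),
      ?(proj2 (Hneg _)), ?(proj2 (Himp _ _)), ?(proj2 (Hor _ _)), ?(proj2 (Hand _ _)),
      ?(proj2 (Hneg _)), ?(proj2 (Himp _ _)), ?(proj2 (Hor _ _)), ?(proj2 (Hand _ _));
    rewrite ?Hcirc; simpl;
    rewrite ?(proj2 (Hneg _)); simpl;
    repeat match goal with
    | |- context [c1 (h ?x)] => destruct (HB x); destruct (c1 (h x))
    | |- context [c2 (h ?x)] => destruct (HB x); destruct (c2 (h x))
    | |- context [c3 (h ?x)] => destruct (c3 (h x))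
    end; simpl in *; auto; try discriminate.
  - rewrite (proj2 (Himp _ _)), IH1 in IH2. exact IH2.
Qed.
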